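(* Let $s\ge1$ and let $f\in C^{s+1}(\mathbb{R}^s)$ satisfy $\|D^kf\|_\infty<\infty$ for $k=1,\dots,s+1$. Then for every $\theta\in\{0,1\}^s$, $$\lim_{n\to\infty}\sup_{\alpha\in\mathbb{Z}^s}\left|(-1)^{|\theta|}\,2^{(n+2)|\theta|+ns/2}\,d_{\theta,\alpha}^n(f)-\frac{D^\theta f\left(x_\alpha^n\right)}{\theta!}\right|=0.$$
   Context: Univariate Haar functions: $\psi_0:=\chi_{[0,1]}$ and $\psi_1:=\chi_{[0,\frac12]}-\chi_{[\frac12,1]}$. For $\theta\in\{0,1\}^s$ and $x\in\mathbb{R}^s$, $\psi_\theta(x):=\prod_{j=1}^s\psi_{\theta_j}(x_j)$. For $n\in\mathbb{N}_0$, $\alpha\in\mathbb{Z}^s$, $d_{\theta,\alpha}^n(f):=2^{ns/2}\int_{\mathbb{R}^s}f(t)\,\psi_\theta(2^nt-\alpha)\,dt$. Let $\epsilon:=(1,\dots,1)$ and $x_\alpha^n:=2^{-n}(\alpha+\frac12\epsilon)$. For $k\in\mathbb{N}$, $\|D^kf\|_\infty:=\sup_{x\in\mathbb{R}^s}\max_{|\gamma|=k}\left|\frac{D^\gamma f(x)}{\gamma!}\right|$ (maximum over multi-indices $\gamma\in\mathbb{N}_0^s$). Multi-index notation: $|\theta|=\sum_j\theta_j$, $\theta!=\prod_j\theta_j!$. *)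

(* Defs.v *)
From Stdlib Require Import Reals ZArith.
From Coquelicot Require Import Coquelicot.
From mathcomp Require Import ssreflect ssrfun ssrbool eqtype ssrnat seq fintype.

Set Implicit Arguments.
Unset Strict Implicit.

Local Open Scope R_scope.

Definition vec (s : nat) := 'I_s -> R.

Definition upd {s} (x : vec s) (j : 'I_s) (t : R) : vec s :=
  fun i => if i == j then t else x i.

Definition pd {s} (j : 'I_s) (g : vec s -> R) : vec s -> R :=
  fun x => Derive (fun t => g (upd x j t)) (x j).

Definition pdl {s} (l : seq 'I_s) (g : vec s -> R) : vec s -> R :=
  foldr (fun j h => pd j h) g l.

Definition cont_vec {s} (g : vec s -> R) : Prop :=
  forall (x : vec s) (eps : R), 0 < eps -> exists delta, 0 < delta /\
    forall y : vec s, (forall i, Rabs (y i - x i) < delta) ->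
      Rabs (g y - g x) < eps.

Definition Ck {s} (k : nat) (f : vec s -> R) : Prop :=
  (forall l : seq 'I_s, (size l < k)%N ->
     forall (j : 'I_s) (x : vec s), ex_derive (fun t => pdl l f (upd x j t)) (x j))
  /\ (forall l : seq 'I_s, (size l <= k)%N -> cont_vec (pdl l f)).

Definition mabs {s} (g : 'I_s -> nat) : nat := foldr addn 0%N (map g (enum 'I_s)).
Definition mfact {s} (g : 'I_s -> nat) : nat :=
  foldr muln 1%N (map (fun i => factorial (g i)) (enum 'I_s)).

Definition Dmulti {s} (g : 'I_s -> nat) (f : vec s -> R) : vec s -> R :=
  pdl (flatten (map (fun i => nseq (g i) i) (enum 'I_s))) f.

(* ||D^k f||_oo < oo *)
Definition Dk_bounded {s} (k : nat) (f : vec s -> R) : Prop :=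
  exists M : R, forall (x : vec s) (g : 'I_s -> nat), mabs g = k ->
    Rabs (Dmulti g f x / INR (mfact g)) <= M.

Definition chi (a b x : R) : R :=
  if Rle_dec a x then (if Rle_dec x b then 1 else 0) else 0.
Definition psi0 (x : R) : R := chi 0 1 x.
Definition psi1 (x : R) : R := chi 0 (/2) x - chi (/2) 1 x.
Definition psi1d (b : bool) : R -> R := if b then psi1 else psi0.

Definition Rprodl (l : seq R) : R := foldr Rmult 1 l.

Definition psi {s} (theta : 'I_s -> bool) (x : vec s) : R :=
  Rprodl (map (fun j => psi1d (theta j) (x j)) (enum 'I_s)).

Fixpoint iter_int {s} (l : seq 'I_s) (a b : vec s) (g : vec s -> R) (x : vec s) : R :=
  match l with
  | [::] => g x
  | j :: l' => RInt (fun t => iter_int l' a b g (upd x j t)) (a j) (b j)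
  end.
Definition box_integral {s} (a b : vec s) (g : vec s -> R) : R :=
  iter_int (enum 'I_s) a b g (fun _ => 0).

(* d^n_{theta,alpha}(f) = 2^{ns/2} int_{R^s} f(t) psi_theta(2^n t - alpha) dt;
   the integrand vanishes outside the dyadic cube
   prod_j [2^{-n} alpha_j, 2^{-n}(alpha_j + 1)], so we integrate over it. *)
Definition haar_coef {s} (theta : 'I_s -> bool) (n : nat) (alpha : 'I_s -> Z)
    (f : vec s -> R) : R :=
  Rpower 2 (INR (n * s) / 2) *
  box_integral (fun j => IZR (alpha j) / 2 ^ n) (fun j => (IZR (alpha j) + 1) / 2 ^ n)
    (fun t => f t * psi theta (fun j => 2 ^ n * t j - IZR (alpha j))).

Definition xna {s} (n : nat) (alpha : 'I_s -> Z) : vec s :=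
  fun j => (IZR (alpha j) + /2) / 2 ^ n.

Definition theta_nat {s} (theta : 'I_s -> bool) : 'I_s -> nat := fun j => nat_of_bool (theta j).

(* Main.v *)
Require Import Defs.
From Stdlib Require Import Reals ZArith Lra Lia FunctionalExtensionality.
From Coquelicot Require Import Coquelicot.
From mathcomp Require Import ssreflect ssrfun ssrbool eqtype ssrnat seq path fintype.

Set Implicit Arguments.
Unset Strict Implicit.
Local Open Scope R_scope.

Lemma upd_same s (x : vec s) j t : upd x j t j = t.
Proof. by rewrite /upd eqxx. Qed.

Lemma upd_other s (x : vec s) j t i : i != j -> upd x j t i = x i.
Proof. by rewrite /upd => /negbTE ->. Qed.

Lemma upd_upd s (x : vec s) j u t : upd (upd x j u) j t = upd x j t.
Proof. apply: functional_extensionality => i; rewrite /upd; by case: (i == j). Qed.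

Lemma upd_comm s (x : vec s) i j u v : i != j ->
  upd (upd x i u) j v = upd (upd x j v) i u.
Proof.
move=> hij; apply: functional_extensionality => k; rewrite /upd.
case ekj: (k == j); case eki: (k == i) => //.
move/eqP: ekj => ekj; move/eqP: eki => eki; subst.
by rewrite eqxx in hij.
Qed.

Lemma upd_id s (x : vec s) j : upd x j (x j) = x.
Proof. apply: functional_extensionality => i; rewrite /upd; by case: eqP => // ->. Qed.

Definition PL {s} (F : vec s -> R) := exists M, 0 <= M /\
  forall x j u, Rabs (F (upd x j u) - F x) <= M * Rabs (u - x j).

Lemma PL_cont s (F : vec s -> R) : PL F -> forall x j t,
  continuous (fun u => F (upd x j u)) t.
Proof.
case=> M [M0 HM] x j t; apply/continuity_pt_filterlim.
move=> eps Heps; exists (eps / (M + 1)); split.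
  apply: Rdiv_lt_0_compat; lra.
move=> y [_ Hy]; rewrite /= /R_dist in Hy *.
have := HM (upd x j t) j y; rewrite upd_upd upd_same => H.
apply: Rle_lt_trans H _.
have: M * Rabs (y - t) <= M * (eps / (M + 1)).
  apply: Rmult_le_compat_l => //; lra.
have : M * (eps / (M + 1)) < eps.
  apply: (Rmult_lt_reg_r (M + 1)); first lra.
  field_simplify; lra.
lra.
Qed.

Lemma RInt_minusR (f g : R -> R) a b : ex_RInt f a b -> ex_RInt g a b ->
  RInt (fun x => f x - g x) a b = RInt f a b - RInt g a b.
Proof. move=> hf hg; exact: (RInt_minus f g a b hf hg). Qed.

Lemma ex_RInt_minusR (f g : R -> R) a b : ex_RInt f a b -> ex_RInt g a b ->
  ex_RInt (fun x => f x - g x) a b.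
Proof. move=> hf hg; exact: (ex_RInt_minus f g a b hf hg). Qed.

Lemma RInt_constR a b (c : R) : RInt (fun _ => c) a b = (b - a) * c.
Proof. exact: RInt_const. Qed.

Lemma ex_RInt_cont (f : R -> R) a b : (forall t, continuous f t) -> ex_RInt f a b.
Proof. move=> hf; apply: ex_RInt_continuous => z _; exact: hf. Qed.

Lemma RInt_approx (g : R -> R) a b C E : a <= b -> (forall t, continuous g t) ->
  (forall t, a <= t <= b -> Rabs (g t - C) <= E) ->
  Rabs (RInt g a b - (b - a) * C) <= (b - a) * E.
Proof.
move=> hab hg hb.
have hc : ex_RInt (fun _ : R => C) a b by apply: ex_RInt_cont => t; exact: continuous_const.
have hg' : ex_RInt g a b by exact: ex_RInt_cont.
rewrite -RInt_constR -(RInt_minusR hg' hc).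
apply: abs_RInt_le_const => //.
exact: ex_RInt_minusR.
Qed.

Lemma cont_shift (Q : R -> R) c : (forall t, continuous Q t) ->
  forall t, continuous (fun t => Q (t + c)) t.
Proof.
move=> hQ t; apply: (continuous_comp (fun t => t + c) Q).
  apply: (continuous_plus (fun t => t) (fun _ => c)).
    exact: continuous_id. exact: continuous_const.
exact: hQ.
Qed.

Lemma cont_minus (Q1 Q2 : R -> R) : (forall t, continuous Q1 t) ->
  (forall t, continuous Q2 t) -> forall t, continuous (fun t => Q1 t - Q2 t) t.
Proof.
move=> h1 h2 t; apply: (continuous_minus Q1 Q2); [exact: h1|exact: h2].
Qed.

Section Haar.
Variable s : nat.
Variable th : 'I_s -> bool.
Variable h : R.
Hypothesis hpos : 0 < h.
Variable a : vec s.

Definition Lj (j : 'I_s) (Q : R -> R) : R :=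
  if th j then RInt (fun t => Q t - Q (t + h/2)) (a j) (a j + h/2)
  else RInt Q (a j) (a j + h).

Fixpoint iter_L (l : seq 'I_s) (K : vec s -> R) (x : vec s) : R :=
  match l with
  | [::] => K x
  | j :: l' => Lj j (fun t => iter_L l' K (upd x j t))
  end.

Lemma Lj_lin j (Q1 Q2 : R -> R) : (forall t, continuous Q1 t) -> (forall t, continuous Q2 t) ->
  Lj j (fun t => Q1 t - Q2 t) = Lj j Q1 - Lj j Q2.
Proof.
move=> h1 h2; rewrite /Lj; case: (th j).
- have e1 : ex_RInt (fun t => Q1 t - Q1 (t + h/2)) (a j) (a j + h/2).
    by apply: ex_RInt_cont; apply: cont_minus => //; exact: cont_shift.
  have e2 : ex_RInt (fun t => Q2 t - Q2 (t + h/2)) (a j) (a j + h/2).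
    by apply: ex_RInt_cont; apply: cont_minus => //; exact: cont_shift.
  rewrite -(RInt_minusR e1 e2); congr RInt; apply: functional_extensionality => t.
  have hr : forall p q r w : R, p - q - (r - w) = p - r - (q - w) by move=> *; ring.
  exact: hr.
- apply: RInt_minusR; exact: ex_RInt_cont.
Qed.

Definition wdt j := if th j then h/2 else h.

Lemma Lj_approx j (Q : R -> R) C E : (forall t, continuous Q t) ->
  (if th j then (forall t, a j <= t <= a j + h/2 -> Rabs (Q t - Q (t + h/2) - C) <= E)
   else (forall t, a j <= t <= a j + h -> Rabs (Q t - C) <= E)) ->
  Rabs (Lj j Q - wdt j * C) <= wdt j * E.
Proof.
move=> hQ; rewrite /Lj /wdt; case: (th j) => hb.
- have := @RInt_approx (fun t => Q t - Q (t + h/2)) (a j) (a j + h/2) C E.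
  replace (a j + h/2 - a j) with (h/2) by ring; apply; [lra| |exact: hb].
  apply: cont_minus => //; exact: cont_shift.
- have := @RInt_approx Q (a j) (a j + h) C E.
  replace (a j + h - a j) with h by ring; apply; [lra|exact: hQ|exact: hb].
Qed.

Lemma wdt_pos j : 0 < wdt j.
Proof. rewrite /wdt; case: (th j); lra. Qed.

Lemma iter_L_PL l K : PL K -> PL (iter_L l K).
Proof.
elim: l => [|j l IH] //= hK.
have [M [M0 HM]] := IH hK.
have hc := PL_cont (IH hK).
exists (2 * h * M); split; first nra.
move=> x k u; case: (eqVneq k j) => [->|hkj].
  have -> : (fun t => iter_L l K (upd (upd x j u) j t)) = (fun t => iter_L l K (upd x j t)).
    by apply: functional_extensionality => t; rewrite upd_upd.
  rewrite Rminus_diag Rabs_R0; apply: Rmult_le_pos; [nra|exact: Rabs_pos].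
rewrite -Lj_lin; try by move=> t; apply: hc.
have hb : forall t, Rabs (iter_L l K (upd (upd x k u) j t) - iter_L l K (upd x j t))
   <= M * Rabs (u - x k).
  move=> t; rewrite (upd_comm _ _ _ hkj).
  have := HM (upd x j t) k u; rewrite upd_other //.
have hB : 0 <= M * Rabs (u - x k) by apply: Rmult_le_pos => //; exact: Rabs_pos.
have := @Lj_approx j (fun t => iter_L l K (upd (upd x k u) j t) - iter_L l K (upd x j t)) 0 (2 * (M * Rabs (u - x k))).
rewrite Rmult_0_r Rminus_0_r => H.
have H' : Rabs (Lj j (fun t => iter_L l K (upd (upd x k u) j t) - iter_L l K (upd x j t)))
  <= wdt j * (2 * (M * Rabs (u - x k))).
  apply: H.
    by apply: cont_minus => t; apply: hc.
  case: (th j) => t _.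
    rewrite Rminus_0_r.
    have := hb t; have := hb (t + h/2).
    move=> h1 h2.
    apply: Rle_trans (Rabs_triang _ _) _.
    rewrite Rabs_Ropp; lra.
  rewrite Rminus_0_r; have := hb t; lra.
apply: Rle_trans H' _.
rewrite /wdt; case: (th j); nra.
Qed.

Lemma iter_L_ext l K1 K2 x1 x2 : uniq l ->
  (forall y1 y2, (forall i, i \in l -> y1 i = y2 i) ->
     (forall i, i \notin l -> y1 i = x1 i /\ y2 i = x2 i) -> K1 y1 = K2 y2) ->
  iter_L l K1 x1 = iter_L l K2 x2.
Proof.
elim: l x1 x2 => [|j l IH] x1 x2 /=.
  move=> _ H; apply: H => // i _; by split.
move=> /andP [jl ul] H; congr (Lj j _); apply: functional_extensionality => t.
apply: IH => // y1 y2 hin hout; apply: H => i.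
  rewrite inE => /orP [/eqP ->|il]; last exact: hin.
  have [-> ->] := hout j jl; by rewrite !upd_same.
rewrite inE negb_or => /andP [ij il].
have [-> ->] := hout i il; by rewrite !upd_other.
Qed.

Lemma PL_sub (K1 K2 : vec s -> R) : PL K1 -> PL K2 -> PL (fun y => K1 y - K2 y).
Proof.
move=> [M1 [M10 H1]] [M2 [M20 H2]]; exists (M1 + M2); split; first lra.
move=> x j u.
have -> : K1 (upd x j u) - K2 (upd x j u) - (K1 x - K2 x) =
  (K1 (upd x j u) - K1 x) - (K2 (upd x j u) - K2 x) by ring.
apply: Rle_trans (Rabs_triang _ _) _; rewrite Rabs_Ropp.
have := H1 x j u; have := H2 x j u; nra.
Qed.

Lemma iter_L_sub l K1 K2 x : PL K1 -> PL K2 ->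
  iter_L l (fun y => K1 y - K2 y) x = iter_L l K1 x - iter_L l K2 x.
Proof.
move=> h1 h2; elim: l x => [|j l IH] x //=.
have -> : (fun t => iter_L l (fun y => K1 y - K2 y) (upd x j t)) =
   (fun t => iter_L l K1 (upd x j t) - iter_L l K2 (upd x j t)).
  by apply: functional_extensionality => t; rewrite IH.
apply: Lj_lin => t; apply: PL_cont; exact: iter_L_PL.
Qed.

Definition shiftK (j : 'I_s) (K : vec s -> R) : vec s -> R :=
  fun y => K (upd y j (y j + h/2)).
Definition dlt (j : 'I_s) (K : vec s -> R) : vec s -> R :=
  fun y => K y - shiftK j K y.

Lemma PL_shift j K : PL K -> PL (shiftK j K).
Proof.
move=> [M [M0 HM]]; exists M; split => // x k u; rewrite /shiftK.
case: (eqVneq k j) => [->|hkj].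
  rewrite upd_upd upd_same.
  have := HM (upd x j (x j + h/2)) j (u + h/2); rewrite upd_upd upd_same.
  by have -> : u + h/2 - (x j + h/2) = u - x j by ring.
rewrite upd_other; last by rewrite eq_sym.
rewrite (upd_comm _ _ _ hkj).
have := HM (upd x j (x j + h/2)) k u; rewrite upd_other //.
Qed.

Lemma PL_dlt j K : PL K -> PL (dlt j K).
Proof. move=> hK; apply: PL_sub => //; exact: PL_shift. Qed.

Fixpoint DL (l : seq 'I_s) (K : vec s -> R) : vec s -> R :=
  match l with [::] => K | j :: l' => DL l' (if th j then dlt j K else K) end.

Definition inR (l : seq 'I_s) (x y : vec s) :=
  forall i, if i \in l then a i <= y i <= a i + wdt i else y i = x i.

Definition Vl (l : seq 'I_s) := Rprodl (map wdt l).

Lemma Vl_pos l : 0 < Vl l.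
Proof.
elim: l => [|j l IH]; rewrite /Vl /=; first lra.
apply: Rmult_lt_0_compat => //; exact: wdt_pos.
Qed.

Lemma inR_cons l j x t y : j \notin l -> a j <= t <= a j + wdt j ->
  inR l (upd x j t) y -> inR (j :: l) x y.
Proof.
move=> jl ht H i; have := H i; rewrite inE.
case: (eqVneq i j) => [->|hij] /=.
  by rewrite (negbTE jl) upd_same => ->.
by case: (i \in l) => //; rewrite upd_other.
Qed.

Lemma main_bound l : uniq l -> forall K, PL K -> forall x C E,
  (forall y, inR l x y -> Rabs (DL l K y - C) <= E) ->
  Rabs (iter_L l K x - Vl l * C) <= Vl l * E.
Proof.
elim: l => [|j l IH] /=.
  move=> _ K _ x C E H; rewrite /Vl /= !Rmult_1_l; apply: H => i; by rewrite in_nil.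
move=> /andP [jl ul] K hK x C E H.
have -> : Vl (j :: l) = wdt j * Vl l by [].
rewrite !Rmult_assoc; apply: Lj_approx.
  by move=> t; apply: PL_cont; exact: iter_L_PL.
rewrite /wdt in H *.
case hj: (th j) H => H t ht.
- have -> : iter_L l K (upd x j (t + h / 2)) =
            iter_L l (shiftK j K) (upd x j t).
    apply: iter_L_ext => // y1 y2 hin hout; rewrite /shiftK.
    congr K; apply: functional_extensionality => i.
    have [_ ->] := hout j jl; rewrite upd_same.
    case: (eqVneq i j) => [->|hij]; first by rewrite upd_same; have [-> _] := hout j jl; rewrite upd_same.
    rewrite upd_other //; case: (boolP (i \in l)) => il; first by rewrite hin.
    have [-> ->] := hout i il; by rewrite !upd_other.
  rewrite -iter_L_sub //; last exact: PL_shift.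
  apply: (IH ul (dlt j K) (PL_dlt j hK)) => y hy.
  apply: H; apply: (inR_cons jl _ hy); by rewrite /wdt hj.
- apply: (IH ul K hK) => y hy.
  apply: H; apply: (inR_cons jl _ hy); by rewrite /wdt hj.
Qed.


Lemma pd_dlt i j (g : vec s -> R) : i != j ->
  (forall w, ex_derive (fun t => g (upd w i t)) (w i)) ->
  (forall w, ex_derive (fun t => dlt j g (upd w i t)) (w i)) /\
  pd i (dlt j g) = dlt j (pd i g).
Proof.
move=> hij hg.
have E : forall w, (fun t => dlt j g (upd w i t)) =
   (fun t => g (upd w i t) - g (upd (upd w j (w j + h/2)) i t)).
  move=> w; apply: functional_extensionality => t.
  rewrite /dlt /shiftK upd_other; last by rewrite eq_sym.
  by rewrite (upd_comm _ _ _ hij).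
have hw' : forall w, ex_derive (fun t => g (upd (upd w j (w j + h/2)) i t)) (w i).
  move=> w; have := hg (upd w j (w j + h/2)); by rewrite upd_other.
split.
  move=> w; rewrite E; exact: (ex_derive_minus _ _ _ (hg w) (hw' w)).
apply: functional_extensionality => w; rewrite /pd E.
rewrite (Derive_minus _ _ _ (hg w) (hw' w)).
rewrite /dlt /shiftK upd_other //.
Qed.

Lemma DL_pd l i g : i \notin [seq j <- l | th j] ->
  (forall w, ex_derive (fun t => g (upd w i t)) (w i)) ->
  (forall w, ex_derive (fun t => DL l g (upd w i t)) (w i)) /\
  pd i (DL l g) = DL l (pd i g).
Proof.
elim: l g => [|j l IH] g /=; first by split.
case hj: (th j) => /= hi hg.
  rewrite inE negb_or in hi; case/andP: hi => hij hi.
  have [e1 e2] := pd_dlt hij hg.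
  have [e3 e4] := IH _ hi e1.
  by rewrite e4 e2; split.
exact: IH.
Qed.

Lemma DL_rcons l j g : DL (rcons l j) g = if th j then dlt j (DL l g) else DL l g.
Proof. by elim: l g => [|k l IH] g //=; rewrite IH. Qed.

Lemma pdl_rcons L j (g : vec s -> R) : pdl (rcons L j) g = pdl L (pd j g).
Proof. by elim: L => //= k L ->. Qed.

Lemma line_derive (F : vec s -> R) j :
  (forall w, ex_derive (fun t => F (upd w j t)) (w j)) ->
  forall x t, is_derive (fun u => F (upd x j u)) t (pd j F (upd x j t)).
Proof.
move=> hF x t.
have E : (fun u => F (upd (upd x j t) j u)) = (fun u => F (upd x j u)).
  by apply: functional_extensionality => u; rewrite upd_upd.
have := hF (upd x j t); rewrite upd_same E => hd.
rewrite /pd upd_same E; exact: Derive_correct.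
Qed.

Lemma chain l g : uniq l ->
  (forall L, (size L < size [seq j <- l | th j])%N ->
     forall i w, ex_derive (fun t => pdl L g (upd w i t)) (w i)) ->
  forall y T E,
  (forall z, (forall i, i \notin [seq j <- l | th j] -> z i = y i) ->
     (forall i, i \in [seq j <- l | th j] -> y i <= z i <= y i + h/2) ->
     Rabs (pdl [seq j <- l | th j] g z - T) <= E) ->
  Rabs (DL l g y - (- (h/2)) ^ size [seq j <- l | th j] * T)
    <= (h/2) ^ size [seq j <- l | th j] * E.
Proof.
elim/last_ind: l g => [|l j IH] g.
  move=> _ _ y T E H /=; rewrite !Rmult_1_l; apply: H => //.
rewrite rcons_uniq => /andP [jl ul].
rewrite DL_rcons filter_rcons; case hj: (th j) => hD y T E H; last first.
  exact: IH.
set J := [seq j <- l | th j] in hD H *.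
have jJ : j \notin J by rewrite mem_filter hj.
have hgj : forall w, ex_derive (fun t => g (upd w j t)) (w j).
  by move=> w; apply: (hD [::]); rewrite size_rcons.
have [hG1 hG2] := DL_pd jJ hgj.
set G := DL l g in hG1 hG2 *.
have hder := line_derive hG1 y.
have := MVT_gen (fun u => G (upd y j u)) (y j) (y j + h/2) (fun u => pd j G (upd y j u)).
rewrite Rmin_left; last lra. rewrite Rmax_right; last lra.
case.
- by move=> t _; exact: hder.
- move=> t _; apply/continuity_pt_filterlim.
  apply: ex_derive_continuous; eexists; exact: hder.
move=> c [hc eqc].
rewrite upd_id in eqc.
have -> : dlt j G y = - (h/2) * DL l (pd j g) (upd y j c).
  rewrite /dlt /shiftK -hG2; lra.
have IH' := IH (pd j g) ul _ (upd y j c) T E.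
have H1 : Rabs (DL l (pd j g) (upd y j c) - (- (h/2)) ^ size J * T) <= (h/2) ^ size J * E.
  apply: IH'.
    move=> L hL i w; rewrite -pdl_rcons; apply: hD; rewrite !size_rcons; done.
  move=> z hz1 hz2; rewrite -pdl_rcons; apply: H => i.
    rewrite mem_rcons inE negb_or => /andP [hij hiJ].
    by rewrite hz1 // upd_other.
  rewrite mem_rcons inE => /orP [/eqP ->|hiJ].
    by rewrite hz1 // upd_same.
  have hij : i != j by apply/negP => /eqP e; subst; rewrite hiJ in jJ.
  by have := hz2 i hiJ; rewrite upd_other.
rewrite size_rcons /=.
have -> : - (h/2) * DL l (pd j g) (upd y j c) - - (h/2) * (- (h/2)) ^ size J * T
   = - (h/2) * (DL l (pd j g) (upd y j c) - (- (h/2)) ^ size J * T) by ring.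
rewrite Rabs_mult Rabs_Ropp Rabs_pos_eq; last lra.
rewrite Rmult_assoc; apply: Rmult_le_compat_l => //; lra.
Qed.

End Haar.

Lemma RInt_ChaslesR (f : R -> R) a b c : ex_RInt f a b -> ex_RInt f b c ->
  RInt f a b + RInt f b c = RInt f a c.
Proof. move=> h1 h2; exact: (RInt_Chasles f a b c h1 h2). Qed.

Lemma RInt_oppR (f : R -> R) a b : ex_RInt f a b ->
  RInt (fun x => - f x) a b = - RInt f a b.
Proof. move=> h1; exact: (RInt_opp f a b h1). Qed.

Lemma RInt_scalR (f : R -> R) a b k : ex_RInt f a b ->
  RInt (fun x => k * f x) a b = k * RInt f a b.
Proof. move=> h1; exact: (RInt_scal f a b k h1). Qed.

Lemma RInt_shiftR (Q : R -> R) a b v : ex_RInt Q (a + v) (b + v) ->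
  RInt (fun y => Q (y + v)) a b = RInt Q (a + v) (b + v).
Proof.
move=> hQ; have := RInt_comp_lin Q 1 v a b; rewrite !Rmult_1_l => H.
rewrite -H //; congr RInt; apply: functional_extensionality => y.
change (Q (y + v) = 1 * Q (1 * y + v)); rewrite !Rmult_1_l //.
Qed.

Lemma rm1 (x : R) : x = 1 * x. Proof. ring. Qed.
Lemma rm1' (x : R) : 1 * x = x. Proof. ring. Qed.
Lemma rmm1 (x : R) : - x = -1 * x. Proof. ring. Qed.
Lemma rmm1' (x : R) : -1 * x = - x. Proof. ring. Qed.

Section Weights.
Variable s : nat.
Variable th : 'I_s -> bool.
Variable h : R.
Hypothesis hpos : 0 < h.
Variable a : vec s.
Variable phi : 'I_s -> R -> R.
Hypothesis H0 : forall j t, th j = false -> a j < t < a j + h -> phi j t = 1.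
Hypothesis H1a : forall j t, th j = true -> a j < t < a j + h/2 -> phi j t = 1.
Hypothesis H1b : forall j t, th j = true -> a j + h/2 < t < a j + h -> phi j t = -1.

Lemma Lj_weight j (Q : R -> R) : (forall t, continuous Q t) ->
  ex_RInt (fun t => phi j t * Q t) (a j) (a j + h) /\
  RInt (fun t => phi j t * Q t) (a j) (a j + h) = Lj th h a j Q.
Proof.
move=> hQ; rewrite /Lj; case hj: (th j).
- set c := a j + h/2.
  have eA : ex_RInt (fun t => phi j t * Q t) (a j) c.
    apply: (ex_RInt_ext Q); last exact: ex_RInt_cont.
    move=> t; rewrite Rmin_left /c; [|lra]; rewrite Rmax_right; [|lra] => ht.
    rewrite H1a //; exact: rm1.
  have eQ : forall u v, ex_RInt Q u v by move=> u v; exact: ex_RInt_cont.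
  have eB : ex_RInt (fun t => phi j t * Q t) c (a j + h).
    apply: (ex_RInt_ext (fun t => - Q t)); last exact: (ex_RInt_opp Q _ _ (eQ _ _)).
    move=> t; rewrite Rmin_left /c; [|lra]; rewrite Rmax_right; [|lra] => ht.
    rewrite H1b //; exact: rmm1.
  split; first exact: ex_RInt_Chasles eA eB.
  rewrite -(RInt_ChaslesR eA eB).
  have -> : RInt (fun t => phi j t * Q t) (a j) c = RInt Q (a j) c.
    apply: RInt_ext => t; rewrite Rmin_left /c; [|lra]; rewrite Rmax_right; [|lra] => ht.
    rewrite H1a //; exact: rm1'.
  have -> : RInt (fun t => phi j t * Q t) c (a j + h) = RInt (fun t => - Q t) c (a j + h).
    apply: RInt_ext => t; rewrite Rmin_left /c; [|lra]; rewrite Rmax_right; [|lra] => ht.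
    rewrite H1b //; exact: rmm1'.
  rewrite RInt_oppR // RInt_minusR //; last by apply: ex_RInt_cont; exact: cont_shift.
  rewrite RInt_shiftR // /c.
  have -> : a j + h / 2 + h / 2 = a j + h by field.
  reflexivity.
- split.
    apply: (ex_RInt_ext Q); last exact: ex_RInt_cont.
    move=> t; rewrite Rmin_left; [|lra]; rewrite Rmax_right; [|lra] => ht.
    rewrite H0 //; exact: rm1.
  apply: RInt_ext => t; rewrite Rmin_left; [|lra]; rewrite Rmax_right; [|lra] => ht.
  rewrite H0 //; exact: rm1'.
Qed.

Lemma step1 l : uniq l -> forall K, PL K -> forall W : vec s -> R,
  (forall x j u, j \in l -> W (upd x j u) = W x) -> forall x,
  iter_int l a (fun j => a j + h)
    (fun t => K t * (W t * Rprodl (map (fun j => phi j (t j)) l))) x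
  = W x * iter_L th h a l K x.
Proof.
elim: l => [|j l IH] /=.
  move=> _ K _ W _ x; rewrite /Rprodl /=; ring.
move=> /andP [jl ul] K hK W hW x.
have E : (fun t => K t * (W t * Rprodl (map (fun j0 => phi j0 (t j0)) (j :: l)))) =
   (fun t => K t * ((fun y => W y * phi j (y j)) t * Rprodl (map (fun j0 => phi j0 (t j0)) l))).
  by apply: functional_extensionality => t; rewrite /Rprodl /=; ring.
rewrite E.
have hW' : forall y k u, k \in l ->
    (fun y => W y * phi j (y j)) (upd y k u) = (fun y => W y * phi j (y j)) y.
  move=> y k u kl /=; rewrite hW; last by rewrite inE kl orbT.
  rewrite upd_other //; apply/negP => /eqP e; subst; by rewrite kl in jl.
have -> : (fun t => iter_int l a (fun j => a j + h)
    (fun t0 => K t0 * ((fun y => W y * phi j (y j)) t0 *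
       Rprodl (map (fun j0 => phi j0 (t0 j0)) l))) (upd x j t)) =
   (fun t => W x * (phi j t * iter_L th h a l K (upd x j t))).
  apply: functional_extensionality => t; rewrite IH //=.
  rewrite hW ?inE ?eqxx // upd_same; ring.
have hc : forall t, continuous (fun t => iter_L th h a l K (upd x j t)) t.
  by move=> t; apply: PL_cont; exact: iter_L_PL.
have [ex eq] := Lj_weight j hc.
by rewrite RInt_scalR // eq.
Qed.

End Weights.

Lemma fact_mono n m : (n <= m)%N -> (n`! <= m`!)%N.
Proof.
elim: m => [|m IH]; first by rewrite leqn0 => /eqP ->.
rewrite leq_eqVlt => /orP [/eqP ->|hlt] //.
apply: leq_trans (IH hlt) _; rewrite factS; apply: leq_pmull => //.
Qed.

Lemma count_flat (T : eqType) (g : T -> nat) (e : seq T) x : uniq e ->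
  count_mem x (flatten (map (fun i => nseq (g i) i) e)) = if x \in e then g x else 0%N.
Proof.
elim: e => [|k e IH] //= /andP [ke ue].
rewrite count_cat count_nseq IH // inE.
case: (eqVneq k x) => [ekx|hkx] /=.
  subst k; by rewrite eqxx (negbTE ke) mul1n addn0.
by rewrite (negbTE hkx) mul0n add0n.
Qed.

Lemma size_flat (T : Type) (g : T -> nat) (e : seq T) :
  size (flatten (map (fun i => nseq (g i) i) e)) = foldr addn 0%N (map g e).
Proof. by elim: e => //= k e IH; rewrite size_cat size_nseq IH. Qed.

Lemma mfact_le (T : Type) (g : T -> nat) (e : seq T) k : (forall i, g i <= k)%N ->
  (foldr muln 1%N (map (fun i => (g i)`!) e) <= (k`!) ^ (size e))%N.
Proof.
move=> hg; elim: e => //= i e IH; rewrite expnS.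
apply: leq_mul => //; exact: fact_mono.
Qed.

Lemma mfact_gt0 (T : Type) (g : T -> nat) (e : seq T) :
  (0 < foldr muln 1%N (map (fun i => (g i)`!) e))%N.
Proof. by elim: e => //= i e IH; rewrite muln_gt0 fact_gt0. Qed.

Lemma exd_line s (G : vec s -> R) i :
  (forall y, ex_derive (fun t => G (upd y i t)) (y i)) ->
  forall y u, ex_derive (fun t => G (upd y i t)) u.
Proof.
move=> hG y u; have := hG (upd y i u); rewrite upd_same.
have -> // : (fun t => G (upd (upd y i u) i t)) = (fun t => G (upd y i t)).
by apply: functional_extensionality => t; rewrite upd_upd.
Qed.

Lemma cont2d s (H : vec s -> R) i j (w : vec s) : cont_vec H ->
  continuity_2d_pt (fun u v => H (upd (upd w i u) j v)) (w i) (w j).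
Proof.
move=> hH eps; have [d [d0 hd]] := hH w eps (cond_pos eps).
exists (mkposreal d d0) => u v /= hu hv.
rewrite !upd_id; apply: hd => k; rewrite /upd.
case: (eqVneq k j) => [->|_] //; case: (eqVneq k i) => [->|_] //.
rewrite Rminus_diag Rabs_R0; lra.
Qed.

Lemma MVT_PL s (F : vec s -> R) M :
  (forall x j, ex_derive (fun t => F (upd x j t)) (x j)) ->
  (forall x j, Rabs (pd j F x) <= M) ->
  forall x j u, Rabs (F (upd x j u) - F x) <= M * Rabs (u - x j).
Proof.
move=> hF hM x j u.
have hder := line_derive (fun w => hF w j) x.
have := MVT_gen (fun t => F (upd x j t)) (x j) u (fun t => pd j F (upd x j t)).
case.
- by move=> t _; exact: hder.
- move=> t _; apply/continuity_pt_filterlim.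
  apply: ex_derive_continuous; eexists; exact: hder.
move=> c [_ eqc]; rewrite upd_id in eqc; rewrite eqc Rabs_mult.
apply: Rmult_le_compat_r; [exact: Rabs_pos|exact: hM].
Qed.

Lemma PL_sum s (F : vec s -> R) M : 0 <= M ->
  (forall x j u, Rabs (F (upd x j u) - F x) <= M * Rabs (u - x j)) ->
  forall z c d, (forall i, Rabs (z i - c i) <= d) ->
  Rabs (F z - F c) <= M * INR s * d.
Proof.
move=> M0 hF z c d hd.
have key : forall l : seq 'I_s,
  Rabs (F (fun i => if i \in l then z i else c i) - F c) <= M * INR (size l) * d.
  elim => [|k l IH].
    have -> : (fun i => if i \in [::] then z i else c i) = c.
      by apply: functional_extensionality => i; rewrite in_nil.
    rewrite Rminus_diag Rabs_R0 /=; lra.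
  have -> : (fun i => if i \in k :: l then z i else c i) =
      upd (fun i => if i \in l then z i else c i) k (z k).
    apply: functional_extensionality => i; rewrite /upd inE.
    by case: (eqVneq i k) => [->|] //=.
  set m := (fun i => if i \in l then z i else c i) in IH *.
  have hk : Rabs (z k - m k) <= d.
    rewrite /m; case: (k \in l) => //; rewrite Rminus_diag Rabs_R0.
    apply: Rle_trans (hd k); exact: Rabs_pos.
  have := hF m k (z k).
  have -> : F (upd m k (z k)) - F c = (F (upd m k (z k)) - F m) + (F m - F c) by ring.
  move=> h1; apply: Rle_trans (Rabs_triang _ _) _.
  rewrite (_ : size (k :: l) = (size l).+1) // S_INR.
  have : M * Rabs (z k - m k) <= M * d by apply: Rmult_le_compat_l.
  nra.
have := key (enum 'I_s); rewrite size_enum_ord.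
have -> // : (fun i => if i \in enum 'I_s then z i else c i) = z.
by apply: functional_extensionality => i; rewrite mem_enum.
Qed.

Section Fsec.
Variable s : nat.
Variable f : vec s -> R.
Hypothesis hf : Ck s.+1 f.

Lemma hf1 L : (size L < s.+1)%N -> forall j x,
  ex_derive (fun t => pdl L f (upd x j t)) (x j).
Proof. exact: hf.1. Qed.

Lemma hf2 L : (size L <= s.+1)%N -> cont_vec (pdl L f).
Proof. exact: hf.2. Qed.

Lemma pd_comm L i j : ((size L).+2 <= s.+1)%N ->
  pd i (pd j (pdl L f)) = pd j (pd i (pdl L f)).
Proof.
case: (eqVneq i j) => [->|hij] // hL.
set G := pdl L f.
have hG : forall k y, ex_derive (fun t => G (upd y k t)) (y k).
  by move=> k y; apply: hf1; apply: leq_trans hL; rewrite ltnS leqnSn.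
have hGi : forall k y, ex_derive (fun t => pd i G (upd y k t)) (y k).
  by move=> k y; apply: (hf1 (L := i :: L)); apply: leq_trans hL.
have hGj : forall k y, ex_derive (fun t => pd j G (upd y k t)) (y k).
  by move=> k y; apply: (hf1 (L := j :: L)); apply: leq_trans hL.
have hji : j != i by rewrite eq_sym.
apply: functional_extensionality => w.
set F := fun u v => G (upd (upd w i u) j v).
have e1 : forall z v, Derive (fun t => F z t) v = pd j G (upd (upd w i z) j v).
  move=> z v; rewrite /pd upd_same /F; congr Derive.
  by apply: functional_extensionality => t; rewrite upd_upd.
have e2 : forall t z, Derive (fun t0 => F t0 z) t = pd i G (upd (upd w i t) j z).
  move=> t z; rewrite /pd /F.
  have Y : upd (upd w i t) j z = upd (upd w j z) i t := upd_comm _ _ _ hij.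
  rewrite Y upd_same; congr Derive; apply: functional_extensionality => t0.
  by rewrite upd_upd (upd_comm _ _ _ hij).
have := Schwarz F (w i) (w j).
have -> : (fun z => Derive (fun t => F z t) (w j)) = (fun z => pd j G (upd w i z)).
  apply: functional_extensionality => z; rewrite e1.
  by rewrite -{2}(upd_id (upd w i z) j) upd_other.
have -> : (fun z => Derive (fun t => F t z) (w i)) = (fun z => pd i G (upd w j z)).
  by apply: functional_extensionality => z; rewrite e2 upd_id.
move=> HS; rewrite /pd in HS *; apply: HS.
- exists (mkposreal 1 Rlt_0_1) => u v _ _; split; [|split; [|split]].
  + have -> : (fun z => F z v) = (fun z => G (upd (upd w j v) i z)).
      by apply: functional_extensionality => z; rewrite /F (upd_comm _ _ _ hij).
    exact: exd_line.
  + exact: exd_line.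
  + have -> : (fun z => Derive (fun t => F z t) v) = (fun z => pd j G (upd (upd w j v) i z)).
      by apply: functional_extensionality => z; rewrite e1 (upd_comm _ _ _ hij).
    exact: exd_line.
  + have -> : (fun z => Derive (fun t => F t z) u) = (fun z => pd i G (upd (upd w i u) j z)).
      by apply: functional_extensionality => z; rewrite e2.
    exact: exd_line.
- have -> : (fun u v => Derive (fun z => Derive (fun t => F z t) v) u) =
      (fun u v => pd i (pd j G) (upd (upd w i u) j v)).
    apply: functional_extensionality => u; apply: functional_extensionality => v.
    have -> : (fun z => Derive (fun t => F z t) v) = (fun z => pd j G (upd (upd w j v) i z)).
      by apply: functional_extensionality => z; rewrite e1 (upd_comm _ _ _ hij).
    rewrite [in RHS](upd_comm _ _ _ hij) /pd upd_same.
    congr Derive; apply: functional_extensionality => z; by rewrite upd_upd.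
  apply: cont2d; exact: (hf2 (L := i :: j :: L)).
- have -> : (fun u v => Derive (fun z => Derive (fun t => F t z) u) v) =
      (fun u v => pd j (pd i G) (upd (upd w i u) j v)).
    apply: functional_extensionality => u; apply: functional_extensionality => v.
    have -> : (fun z => Derive (fun t => F t z) u) = (fun z => pd i G (upd (upd w i u) j z)).
      by apply: functional_extensionality => z; rewrite e2.
    rewrite [in RHS]/pd upd_same.
    congr Derive; apply: functional_extensionality => z; by rewrite upd_upd.
  apply: cont2d; exact: (hf2 (L := j :: i :: L)).
Qed.

End Fsec.

Section Fsec2.
Variable s : nat.
Variable f : vec s -> R.
Hypothesis hf : Ck s.+1 f.
Hypothesis hD : forall k : nat, (1 <= k)%N -> (k <= s.+1)%N -> Dk_bounded k f.

Lemma pd_move x p1 p2 : (size (p1 ++ p2) < s.+1)%N ->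
  pd x (pdl (p1 ++ p2) f) = pdl (p1 ++ x :: p2) f.
Proof.
elim: p1 => [|k p1 IH] //= hs.
rewrite (pd_comm hf) //; rewrite IH //; exact: ltnW.
Qed.

Lemma pdl_perm l1 l2 : perm_eq l1 l2 -> (size l1 <= s.+1)%N -> pdl l1 f = pdl l2 f.
Proof.
elim: l1 l2 => [|x l1 IH] l2 hp hs.
  by move/perm_size: hp => /= /esym/size0nil ->.
have hx : x \in l2 by rewrite -(perm_mem hp) mem_head.
move: hp; case/splitPr: hx => p1 p2 hp.
have hp' : perm_eq l1 (p1 ++ p2).
  rewrite -(perm_cons x); apply: (perm_trans hp).
  by rewrite -[x :: p2]cat1s perm_catCA.
rewrite /= (IH _ hp'); last exact: ltnW.
apply: pd_move; by rewrite -(perm_size hp').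
Qed.

Lemma Dbound k : (1 <= k)%N -> (k <= s.+1)%N -> exists M, 0 <= M /\
  forall L, size L = k -> forall x, Rabs (pdl L f x) <= M.
Proof.
move=> k1 ks; have [M0 HM] := hD k1 ks.
exists (Rmax 0 M0 * INR ((k`!) ^ s)); split.
  apply: Rmult_le_pos; [exact: Rmax_l|exact: pos_INR].
move=> L hL x.
set g := fun i : 'I_s => count_mem i L.
set S := flatten (map (fun i => nseq (g i) i) (enum 'I_s)).
have hp : perm_eq L S.
  apply/allP => y _ /=; apply/eqP.
  by rewrite /S count_flat ?enum_uniq // mem_enum.
have hsz : mabs g = k.
  by rewrite /mabs -size_flat -/S -(perm_size hp) hL.
have := HM x g hsz; rewrite /Dmulti -/S -(pdl_perm hp); last by rewrite hL.
have mf0 : (0 < mfact g)%N by exact: mfact_gt0.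
have mfle : (mfact g <= (k`!) ^ s)%N.
  have := @mfact_le _ g (enum 'I_s) k; rewrite size_enum_ord; apply => i.
  rewrite -hL; exact: count_size.
have hmf : 0 < INR (mfact g) by apply: lt_0_INR; apply/ltP.
have hmf2 : INR (mfact g) <= INR ((k`!) ^ s) by apply: le_INR; apply/leP.
move=> hb.
have -> : pdl L f x = (pdl L f x / INR (mfact g)) * INR (mfact g) by field; lra.
rewrite Rabs_mult (Rabs_pos_eq (INR _)); last lra.
have := Rmax_r 0 M0; have := Rabs_pos (pdl L f x / INR (mfact g)).
nra.
Qed.

End Fsec2.

Lemma mabs_th s (th : 'I_s -> bool) :
  mabs (theta_nat th) = size [seq j <- enum 'I_s | th j].
Proof. rewrite /mabs /theta_nat; elim: (enum 'I_s) => //= j e ->; by case: (th j). Qed.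

Lemma Dmulti_th s (th : 'I_s -> bool) (f : vec s -> R) :
  Dmulti (theta_nat th) f = pdl [seq j <- enum 'I_s | th j] f.
Proof.
rewrite /Dmulti /theta_nat; congr pdl.
elim: (enum 'I_s) => //= j e ->; by case: (th j).
Qed.

Lemma mfact_th s (th : 'I_s -> bool) : mfact (theta_nat th) = 1%N.
Proof. rewrite /mfact /theta_nat; elim: (enum 'I_s) => //= j e ->; by case: (th j). Qed.

Lemma Vl_pow s (th : 'I_s -> bool) h l :
  Vl th h l * 2 ^ size [seq j <- l | th j] = h ^ size l.
Proof.
elim: l => [|j l IH]; first by rewrite /Vl /=; ring.
have -> : Vl th h (j :: l) = wdt th h j * Vl th h l by [].
rewrite /wdt /=; case: (th j) => /=; rewrite -IH; field.
Qed.

Lemma INR_pow2 n : INR n + 1 <= 2 ^ n.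
Proof.
elim: n => [|n IH]; first by rewrite /=; lra.
rewrite S_INR /=; have := pos_INR n; lra.
Qed.

Lemma final_step (k s' : nat) (P h I T eta V : R) : 0 < P -> h = / P ->
  V * 2 ^ k = h ^ s' ->
  Rabs (I - V * ((- (h/2)) ^ k * T)) <= V * ((h/2) ^ k * eta) ->
  Rabs ((-1) ^ k * (P ^ k * 4 ^ k * P ^ s') * I - T) <= eta.
Proof.
move=> hP hh hV hb.
have e1 : (- (h/2)) ^ k = (-1) ^ k * (h/2) ^ k.
  by rewrite -Rpow_mult_distr; congr pow; ring.
have e2 : (-1) ^ k * (-1) ^ k = 1.
  by rewrite -Rpow_mult_distr (_ : -1 * -1 = 1) ?pow1 //; ring.
have e4 : (h/2) ^ k * 2 ^ k = h ^ k.
  by rewrite -Rpow_mult_distr; congr pow; field.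
have e5 : forall m, P ^ m * h ^ m = 1.
  by move=> m; rewrite -Rpow_mult_distr hh Rinv_r ?pow1 //; lra.
have e6 : (4:R) ^ k = 2 ^ k * 2 ^ k.
  by rewrite -Rpow_mult_distr; congr pow; ring.
have e3 : P ^ k * 4 ^ k * P ^ s' * V * (h/2) ^ k = 1.
  rewrite e6.
  have -> : P ^ k * (2 ^ k * 2 ^ k) * P ^ s' * V * (h / 2) ^ k =
     (P ^ k * ((h/2) ^ k * 2 ^ k)) * (P ^ s' * (V * 2 ^ k)) by ring.
  by rewrite e4 hV !e5; ring.
rewrite e1 in hb.
have -> : (-1) ^ k * (P ^ k * 4 ^ k * P ^ s') * I - T =
   (-1) ^ k * (P ^ k * 4 ^ k * P ^ s') * (I - V * ((-1) ^ k * (h / 2) ^ k * T))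
   + T * ((-1) ^ k * (-1) ^ k * (P ^ k * 4 ^ k * P ^ s' * V * (h/2) ^ k) - 1) by ring.
rewrite e2 e3 Rmult_1_l Rminus_diag Rmult_0_r Rplus_0_r Rabs_mult Rabs_mult pow_1_abs.
have hQ : 0 < P ^ k * 4 ^ k * P ^ s'.
  apply: Rmult_lt_0_compat; [apply: Rmult_lt_0_compat|]; apply: pow_lt; lra.
rewrite Rabs_pos_eq; last lra.
rewrite Rmult_1_l.
apply: Rle_trans (Rmult_le_compat_l _ _ _ (Rlt_le _ _ hQ) hb) _.
have -> : P ^ k * 4 ^ k * P ^ s' * (V * ((h / 2) ^ k * eta)) =
  (P ^ k * 4 ^ k * P ^ s' * V * (h / 2) ^ k) * eta by ring.
rewrite e3; lra.
Qed.

Unset Implicit Arguments.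

Theorem corollary3p3 (s : nat) (hs : (1 <= s)%N) (f : vec s -> R)
  (hf : Ck s.+1 f)
  (hD : forall k : nat, (1 <= k)%N -> (k <= s.+1)%N -> Dk_bounded k f)
  (theta : 'I_s -> bool) :
  forall eps : R, 0 < eps -> exists N : nat, forall n : nat, (N <= n)%N ->
    forall alpha : 'I_s -> Z,
      Rabs ((-1) ^ mabs (theta_nat theta) *
            Rpower 2 (INR ((n + 2) * mabs (theta_nat theta)) + INR (n * s) / 2) *
            haar_coef theta n alpha f
            - Dmulti (theta_nat theta) f (xna n alpha) / INR (mfact (theta_nat theta)))
      <= eps.
Proof.
move=> eps heps.
rewrite mabs_th Dmulti_th mfact_th.
set J := [seq j <- enum 'I_s | theta j].
have hJs : (size J <= s)%N.
  by have := count_size theta (enum 'I_s); rewrite size_enum_ord -size_filter.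
have [M1 [M10 HM1]] := Dbound hf hD (k := 1) isT isT.
have hPLf : PL f.
  exists M1; split => //; apply: MVT_PL.
    by move=> x j; exact: (hf1 hf (L := [::])).
  by move=> x j; exact: (HM1 [:: j]).
have [M2 [M20 HM2]] := Dbound hf hD (k := (size J).+1) isT (hJs : (size J < s.+1)%N).
have hLip : forall x j u, Rabs (pdl J f (upd x j u) - pdl J f x) <= M2 * Rabs (u - x j).
  apply: MVT_PL.
    by move=> x j; apply: hf1 => //; rewrite ltnS.
  by move=> x j; exact: (HM2 (j :: J)).
pose K := M2 * INR s + 1.
have hK : 0 < K by rewrite /K; have := pos_INR s; nra.
have [N [hN N0]] := archimed_cor1 (eps / K) (Rdiv_lt_0_compat _ _ heps hK).
exists N => n hn alpha.
have hP : 0 < 2 ^ n by apply: pow_lt; lra.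
pose h := / 2 ^ n.
have hh : 0 < h by apply: Rinv_0_lt_compat.
pose a := fun j => IZR (alpha j) / 2 ^ n.
pose phi := fun j u => psi1d (theta j) (2 ^ n * u - IZR (alpha j)).
have hx : forall j t, (2 ^ n * t - IZR (alpha j)) * h = t - a j.
  by move=> j t; rewrite /h /a; field; lra.
have H0 : forall j t, theta j = false -> a j < t < a j + h -> phi j t = 1.
  move=> j t hj ht; rewrite /phi hj /= /psi0 /chi; have := hx j t.
  set y := 2 ^ n * t - IZR (alpha j) => e.
  case: (Rle_dec 0 y) => h1 /=; [case: (Rle_dec y 1) => h2 /=|]; nra.
have H1a : forall j t, theta j = true -> a j < t < a j + h/2 -> phi j t = 1.
  move=> j t hj ht; rewrite /phi hj /= /psi1 /chi; have := hx j t.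
  set y := 2 ^ n * t - IZR (alpha j) => e.
  case: (Rle_dec 0 y) => h1 /=; [case: (Rle_dec y (/2)) => h2 /=|];
  case: (Rle_dec (/2) y) => h3 /=; try case: (Rle_dec y 1) => h4 /=; nra.
have H1b : forall j t, theta j = true -> a j + h/2 < t < a j + h -> phi j t = -1.
  move=> j t hj ht; rewrite /phi hj /= /psi1 /chi; have := hx j t.
  set y := 2 ^ n * t - IZR (alpha j) => e.
  case: (Rle_dec 0 y) => h1 /=; [case: (Rle_dec y (/2)) => h2 /=|];
  case: (Rle_dec (/2) y) => h3 /=; try case: (Rle_dec y 1) => h4 /=; nra.
have S1 := step1 (th := theta) hh H0 H1a H1b (enum_uniq _) hPLf
   (W := fun _ => 1) (fun _ _ _ _ => erefl) (fun _ => 0).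
have hbox : box_integral (fun j => IZR (alpha j) / 2 ^ n)
   (fun j => (IZR (alpha j) + 1) / 2 ^ n)
   (fun t => f t * psi theta (fun j => 2 ^ n * t j - IZR (alpha j))) =
   iter_L theta h a (enum 'I_s) f (fun _ => 0).
  rewrite /box_integral; transitivity (iter_int (enum 'I_s) a (fun j => a j + h)
    (fun t => f t * ((fun _ => 1) t * Rprodl [seq phi j (t j) | j <- enum 'I_s])) (fun _ => 0));
    last by rewrite S1 /=; ring.
  congr iter_int.
    by apply: functional_extensionality => j; rewrite /a /h; field; lra.
  by apply: functional_extensionality => t; rewrite Rmult_1_l.
have hxna : xna n alpha = (fun j => a j + h/2).
  by apply: functional_extensionality => j; rewrite /xna /a /h; field; lra.
set T := pdl J f (xna n alpha).
set eta := M2 * INR s * (h / 2).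
have Hy : forall y, inR theta h a (enum 'I_s) (fun _ => 0) y ->
    Rabs (DL theta h (enum 'I_s) f y - (- (h/2)) ^ size J * T) <= (h/2) ^ size J * eta.
  move=> y hy; apply: (chain (th := theta) hh (enum_uniq _)).
    move=> L hL i w; apply: hf1 => //.
    apply: leq_trans hL _; apply: leq_trans hJs _; exact: leqnSn.
  move=> z hz1 hz2; rewrite /T /eta; apply: (PL_sum M20 hLip) => i.
  have hin : i \in enum 'I_s by rewrite mem_enum.
  have := hy i; rewrite hin /wdt hxna.
  case hti: (theta i) => hyi.
    have hiJ : i \in J by rewrite mem_filter hti mem_enum.
    have := hz2 i hiJ => hzi; apply: Rabs_le; lra.
  have hiJ : i \notin J by rewrite mem_filter hti.
  rewrite (hz1 i hiJ); apply: Rabs_le; lra.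
have hMB := main_bound hh (enum_uniq _) hPLf Hy.
have hV := Vl_pow theta h (enum 'I_s); rewrite size_enum_ord -/J in hV.
have Hfin := final_step (k := size J) (s' := s) (P := 2 ^ n) hP erefl hV hMB.
rewrite /haar_coef hbox.
have eR : Rpower 2 (INR ((n + 2) * size J) + INR (n * s) / 2) * Rpower 2 (INR (n * s) / 2)
    = (2 ^ n) ^ size J * 4 ^ size J * (2 ^ n) ^ s.
  rewrite -Rpower_plus.
  have -> : INR ((n + 2) * size J) + INR (n * s) / 2 + INR (n * s) / 2 =
            INR ((n + 2) * size J) + INR (n * s) by field.
  rewrite Rpower_plus !Rpower_pow; try lra.
  rewrite -multE !pow_mult -plusE pow_add.
  rewrite Rpow_mult_distr; congr (_ * _ * _); congr pow; ring.
match goal with |- Rabs ?X <= _ =>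
  have -> : X = (-1) ^ size J * ((2 ^ n) ^ size J * 4 ^ size J * (2 ^ n) ^ s) *
    iter_L theta h a (enum 'I_s) f (fun _ => 0) - T end.
  rewrite -eR; change (INR 1) with 1; field.
apply: Rle_trans Hfin _.
have hNpos : 0 < INR N by apply: lt_0_INR.
have hNn : INR N <= 2 ^ n.
  have := INR_pow2 n; have : INR N <= INR n by apply: le_INR; apply/leP.
  lra.
have hhN : h <= / INR N by apply: Rinv_le_contravar.
have hK2 : K * h < eps.
  have : K * h < K * (eps / K) by apply: Rmult_lt_compat_l => //; lra.
  have -> : K * (eps / K) = eps by field; lra.
  done.
rewrite /eta /K in hK2 *; have := pos_INR s; nra.
Qed.
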